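(* Let $X\in\mathbb{R}^{n\times p}$, $Y\in\mathbb{R}^{n\times q}$, $\lambda>0$. Let $(\hat B,\hat S)$ be either (a) a minimizer over $B\in\mathbb{R}^{p\times q}$ and symmetric positive definite $S\in\mathbb{R}^{n\times n}$ of $\frac{1}{2nq}\operatorname{Tr}((Y-XB)^\top S^{-1}(Y-XB))+\frac{1}{2n}\operatorname{Tr}(S)+\lambda\|B\|_{2,1}$; or (b) for given $0<\sigma_{\min}<\sigma_{\max}$, a minimizer over $B\in\mathbb{R}^{p\times q}$ and symmetric $S$ with $\sigma_{\max}\mathrm{Id}_n\succeq S\succeq\sigma_{\min}\mathrm{Id}_n$ of $\frac{1}{2nq}\operatorname{Tr}((Y-XB)^\top S^{-1}(Y-XB))+\frac{\operatorname{Tr}S}{2n}+\lambda\|B\|_{2,1}$. Let $\hat E=Y-X\hat B$. Then $$\|X^\top\hat E\|_{2,\infty}\le\|\hat S\|_2\,\|X^\top\hat S^{-1}\hat E\|_{2,\infty}.$$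
   Context: $\|M\|_{2,\infty}=\max_j\|M_{j:}\|_2$ is the maximum Euclidean norm of the rows of $M$; $\|\cdot\|_2$ is the operator (spectral) norm; $\succeq$ is the Loewner order. *)

(* Defs.v *)
From HB Require Import structures.
From mathcomp Require Import all_boot all_order all_algebra.
From mathcomp Require Import classical_sets reals.
Set Implicit Arguments. Unset Strict Implicit. Unset Printing Implicit Defensive.
Import Order.TTheory GRing.Theory Num.Theory.
Local Open Scope ring_scope.
Local Open Scope classical_set_scope.

Section Defs.
Variable R : realType.

Definition vnorm k (v : 'cV[R]_k) : R := Num.sqrt (\sum_i v i 0 ^+ 2).

Definition rownorm m k (M : 'M[R]_(m, k)) (j : 'I_m) : R :=
  Num.sqrt (\sum_i M j i ^+ 2).

Definition norm21 m k (M : 'M[R]_(m, k)) : R := \sum_j rownorm M j.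

Definition norm2inf m k (M : 'M[R]_(m, k)) : R :=
  \big[Num.max/0]_j rownorm M j.

Definition opnorm m k (M : 'M[R]_(m, k)) : R :=
  sup [set vnorm (M *m v) | v in [set v : 'cV[R]_k | vnorm v <= 1]].

Definition symmetric n (S : 'M[R]_n) : Prop := S^T = S.

Definition spd n (S : 'M[R]_n) : Prop :=
  symmetric S /\ forall v : 'cV[R]_n, v != 0 -> 0 < (v^T *m S *m v) 0 0.

Definition loewner_ge n (A B : 'M[R]_n) : Prop :=
  forall v : 'cV[R]_n, 0 <= (v^T *m (A - B) *m v) 0 0.

Definition objective n p q (X : 'M[R]_(n, p)) (Y : 'M[R]_(n, q)) (lam : R)
    (B : 'M[R]_(p, q)) (S : 'M[R]_n) : R :=
  (2 * n * q)%:R^-1 * \tr ((Y - X *m B)^T *m invmx S *m (Y - X *m B))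
  + (2 * n)%:R^-1 * \tr S + lam * norm21 B.

Definition feas_a n (S : 'M[R]_n) : Prop := spd S.

Definition feas_b n (smin smax : R) (S : 'M[R]_n) : Prop :=
  symmetric S /\ loewner_ge (smax%:M) S /\ loewner_ge S (smin%:M).

Definition minimizer n p q (X : 'M[R]_(n, p)) (Y : 'M[R]_(n, q)) (lam : R)
    (feas : 'M[R]_n -> Prop) (Bh : 'M[R]_(p, q)) (Sh : 'M[R]_n) : Prop :=
  feas Sh /\ forall B S, feas S -> objective X Y lam Bh Sh <= objective X Y lam B S.

End Defs.

(* Main.v *)
Require Import Defs.
From HB Require Import structures.
From mathcomp Require Import all_boot all_order all_algebra.
From mathcomp Require Import classical_sets reals.
From mathcomp Require Import ring lra.
Import Order.TTheory GRing.Theory Num.Theory.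
Local Open Scope ring_scope.
Set Implicit Arguments. Unset Strict Implicit. Unset Printing Implicit Defensive.

Section Main.
Variable R : realType.

Definition dotv k (u w : 'cV[R]_k) : R := \sum_i u i 0 * w i 0.

Lemma dotvE k (u w : 'cV[R]_k) : (u^T *m w) 0 0 = dotv u w.
Proof. by rewrite mxE; apply: eq_bigr => i _; rewrite mxE. Qed.

Lemma dotvC k (u w : 'cV[R]_k) : dotv u w = dotv w u.
Proof. by apply: eq_bigr => i _; rewrite mulrC. Qed.

Lemma dotv_ge0 k (v : 'cV[R]_k) : 0 <= dotv v v.
Proof. by apply: sumr_ge0 => i _; rewrite -expr2 sqr_ge0. Qed.

Lemma dotv_eq0 k (v : 'cV[R]_k) : dotv v v = 0 -> v = 0.
Proof.
move=> /eqP; rewrite psumr_eq0; last by move=> i _; rewrite -expr2 sqr_ge0.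
move=> /allP H; apply/matrixP => i j; rewrite ord1 mxE.
by have := H i (mem_index_enum i); rewrite /= -expr2 sqrf_eq0 => /eqP.
Qed.

Lemma vnormE k (v : 'cV[R]_k) : vnorm v = Num.sqrt (dotv v v).
Proof. by rewrite /vnorm; congr Num.sqrt; apply: eq_bigr => i _; rewrite expr2. Qed.

Lemma vnorm_ge0 k (v : 'cV[R]_k) : 0 <= vnorm v.
Proof. exact: sqrtr_ge0. Qed.

Lemma vnorm_sq k (v : 'cV[R]_k) : vnorm v ^+ 2 = dotv v v.
Proof. by rewrite vnormE sqr_sqrtr // dotv_ge0. Qed.

Lemma dot_expand k (u w : 'cV[R]_k) (x y : R) :
  \sum_i (x * u i 0 - y * w i 0) ^+ 2 =
  x ^+ 2 * dotv u u - x * y * 2 * dotv u w + y ^+ 2 * dotv w w.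
Proof.
rewrite /dotv !mulr_sumr -sumrB -big_split /=; apply: eq_bigr => i _; ring.
Qed.

Lemma CS k (u w : 'cV[R]_k) : dotv u w ^+ 2 <= dotv u u * dotv w w.
Proof.
have H := dot_expand u w (dotv w w) (dotv u w).
have H0 : 0 <= \sum_i (dotv w w * u i 0 - dotv u w * w i 0) ^+ 2.
  by apply: sumr_ge0 => i _; rewrite sqr_ge0.
rewrite H in H0.
have [w0|wpos] := eqVneq (dotv w w) 0.
  have -> : dotv u w = 0 by rewrite /dotv big1 // => i _; rewrite (dotv_eq0 w0) mxE mulr0.
  by rewrite w0 expr0n mulr0.
have ww : 0 < dotv w w by rewrite lt_def wpos dotv_ge0.
set a := dotv w w in H0 ww *; set b := dotv u w in H0 *; set c := dotv u u in H0 *.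
have E : a * (c * a - b ^+ 2) = a ^+ 2 * c - a * b * 2 * b + b ^+ 2 * a by ring.
have : 0 <= a * (c * a - b ^+ 2) by rewrite E.
by rewrite pmulr_rge0 // subr_ge0.
Qed.


Lemma vnorm0 k : vnorm (0 : 'cV[R]_k) = 0.
Proof. by rewrite vnormE /dotv big1 ?sqrtr0 // => i _; rewrite mxE mul0r. Qed.

Lemma vnorm_eq0 k (v : 'cV[R]_k) : vnorm v = 0 -> v = 0.
Proof.
rewrite vnormE => /eqP; rewrite sqrtr_eq0 => H; apply: dotv_eq0.
by apply/eqP; rewrite eq_le H dotv_ge0.
Qed.

Lemma dotvZ k (a b : R) (u w : 'cV[R]_k) : dotv (a *: u) (b *: w) = a * b * dotv u w.
Proof. by rewrite /dotv mulr_sumr; apply: eq_bigr => i _; rewrite !mxE; ring. Qed.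

Lemma vnormZ k (a : R) (v : 'cV[R]_k) : vnorm (a *: v) = `|a| * vnorm v.
Proof. by rewrite !vnormE dotvZ -expr2 sqrtrM ?sqr_ge0 // sqrtr_sqr. Qed.

Lemma mulv_entry m k (M : 'M[R]_(m, k)) v i : (M *m v) i 0 = dotv (row i M)^T v.
Proof. by rewrite mxE; apply: eq_bigr => j _; rewrite !mxE. Qed.

Lemma mulv_bound m k (M : 'M[R]_(m, k)) v :
  dotv (M *m v) (M *m v) <= (\sum_i dotv (row i M)^T (row i M)^T) * dotv v v.
Proof.
rewrite mulr_suml; apply: ler_sum => i _; rewrite mulv_entry -expr2; exact: CS.
Qed.

Definition opset m k (M : 'M[R]_(m, k)) :=
  [set vnorm (M *m v) | v in [set v : 'cV[R]_k | vnorm v <= 1]]%classic.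

Lemma opset_ub m k (M : 'M[R]_(m, k)) : has_ubound (opset M).
Proof.
exists (Num.sqrt (\sum_i dotv (row i M)^T (row i M)^T)) => y [v /= hv <-].
rewrite vnormE ler_sqrt; last by apply: sumr_ge0 => i _; exact: dotv_ge0.
apply: (le_trans (mulv_bound M v)).
have h1 : dotv v v <= 1.
  by rewrite -vnorm_sq; have := vnorm_ge0 v; move: hv; nra.
have h2 : 0 <= \sum_i dotv (row i M)^T (row i M)^T by apply: sumr_ge0 => i _; exact: dotv_ge0.
by rewrite -[leRHS]mulr1 ler_wpM2l.
Qed.

Lemma opnorm_ge0 m k (M : 'M[R]_(m, k)) : 0 <= opnorm M.
Proof.
apply: (ub_le_sup (opset_ub M)).
by exists 0; rewrite /= ?vnorm0 ?ler01 // mulmx0 vnorm0.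
Qed.

Lemma opnorm_le m k (M : 'M[R]_(m, k)) v : vnorm (M *m v) <= opnorm M * vnorm v.
Proof.
have [v0|vpos] := eqVneq (vnorm v) 0.
  by rewrite (vnorm_eq0 v0) mulmx0 vnorm0 vnorm0 mulr0.
have np : 0 < vnorm v by rewrite lt_def vpos vnorm_ge0.
have w1 : vnorm ((vnorm v)^-1 *: v) = 1.
  by rewrite vnormZ ger0_norm ?invr_ge0 ?vnorm_ge0 // mulVf.
have h : vnorm (M *m ((vnorm v)^-1 *: v)) <= opnorm M.
  by apply: (ub_le_sup (opset_ub M)); exists ((vnorm v)^-1 *: v); rewrite /= ?w1.
move: h; rewrite -scalemxAr vnormZ ger0_norm ?invr_ge0 ?vnorm_ge0 // => h.
have ip : 0 < (vnorm v)^-1 by rewrite invr_gt0.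
by rewrite -(ler_pM2l ip) (mulrC (opnorm M)) mulrA mulVf ?mul1r.
Qed.


Lemma bernoulli (e : R) k : 0 <= e -> 1 + k%:R * e <= (1 + e) ^+ k.
Proof.
move=> e0; elim: k => [|k IH]; first by rewrite mul0r addr0 expr0.
rewrite exprS -natr1.
have h : 0 <= k%:R * e by rewrite mulr_ge0.
nra.
Qed.

Lemma logconv (a : nat -> R) (c C : R) : 0 <= c -> (forall k, 0 <= a k) ->
  (forall k, a k.+1 ^+ 2 <= a k * a k.+2) ->
  (forall k, a k <= C * c ^+ (2 * k)) -> a 1%N <= c ^+ 2 * a 0%N.
Proof.
move=> c0 a0 lc bd.
have [a1z|a1p] := eqVneq (a 1%N) 0.
  by rewrite a1z mulr_ge0 ?sqr_ge0.
have a1pos : 0 < a 1%N by rewrite lt_def a1p a0.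
have a0pos : 0 < a 0%N.
  have := lc 0%N; rewrite lt_def a0 andbT; apply: contraTneq => ->.
  by rewrite mul0r -ltNge exprn_gt0.
have pos : forall k, 0 < a k /\ 0 < a k.+1.
  elim=> [|k [h1 h2]]; first by split.
  split => //; have := lc k; have := a0 k.+2.
  rewrite le_eqVlt => /orP[/eqP <-|//]; rewrite mulr0 => h.
  have : 0 < a k.+1 ^+ 2 by rewrite exprn_gt0.
  by rewrite ltNge h.
set rho := a 1%N / a 0%N.
have rhop : 0 < rho by rewrite divr_gt0.
have step : forall k, rho * a k <= a k.+1.
  elim=> [|k IH]; first by rewrite /rho mulfVK // gt_eqF.
  have [hk hk1] := pos k.
  have := lc k => h.
  have h2 : a k * (rho * a k.+1) <= a k * a k.+2.
    apply: (le_trans _ h); rewrite expr2 mulrCA mulrA ler_pM2r //.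
  by rewrite ler_pM2l in h2.
have geo : forall k, a 0%N * rho ^+ k <= a k.
  elim=> [|k IH]; first by rewrite expr0 mulr1.
  apply: (le_trans _ (step k)); rewrite exprS mulrCA ler_pM2l //.
case: (lerP (a 1%N) (c ^+ 2 * a 0%N)) => // H; exfalso.
set d := c ^+ 2.
have rhod : d < rho by rewrite /rho ltr_pdivlMr.
have [d0|dpos] := eqVneq d 0.
  have := le_trans (geo 1%N) (bd 1%N).
  by rewrite muln1 -/d d0 mulr0 expr1 leNgt mulr_gt0.
have dp : 0 < d by rewrite lt_def dpos sqr_ge0.
set r := rho / d.
have r1 : 1 < r by rewrite /r ltr_pdivlMr // mul1r.
have bd2 : forall k, a 0%N * r ^+ k <= C.
  move=> k; have := le_trans (geo k) (bd k).
  rewrite exprM -/d.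
  have -> : rho = r * d by rewrite /r divfK // gt_eqF.
  rewrite exprMn mulrA ler_pM2r // exprn_gt0 //.
set e := r - 1.
have ep : 0 < e by rewrite subr_gt0.
set K := C / (a 0%N * e).
have C0 : 0 <= C.
  by apply: (le_trans _ (bd2 0%N)); rewrite expr0 mulr1 ltW.
have Kp : 0 <= K by rewrite /K divr_ge0 // mulr_ge0 // ltW.
have := archi_boundP Kp; set k := Num.Def.archi_bound K => hk.
have hc := bd2 k.
have hb : 1 + k%:R * e <= r ^+ k.
  by have := bernoulli k (ltW ep); rewrite (_ : 1 + e = r) // /e; ring.
have : a 0%N * (1 + k%:R * e) <= C.
  by apply: (le_trans _ hc); rewrite ler_pM2l.
have : C < a 0%N * (k%:R * e).
  move: hk; rewrite /K ltr_pdivrMr ?mulr_gt0 //.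
  by rewrite (_ : k%:R * (a 0%N * e) = a 0%N * (k%:R * e)) //; ring.
move=> h1 h2; have : a 0%N * (1 + k%:R * e) = a 0%N + a 0%N * (k%:R * e) by ring.
lra.
Qed.


Lemma lin_zero (L K : R) : 0 <= K ->
  (forall s, -1 <= s <= 1 -> - (K * s ^+ 2) <= s * L) -> L = 0.
Proof.
move=> K0 H.
set D := `|L| + K + 1.
have Dp : 0 < D by rewrite /D; have := normr_ge0 L; lra.
set x := L / D.
have LxD : L = x * D by rewrite /x divfK // gt_eqF.
have hx : `|x| <= 1.
  rewrite /x normrM normfV (gtr0_norm Dp) ler_pdivrMr // mul1r /D; lra.
have := H (- x); rewrite -ler_norml normrN => /(_ hx).
rewrite LxD sqrrN => h.
have hx2 : x ^+ 2 * (D - K) <= 0 by nra.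
have hDK : 0 < D - K by rewrite /D; have := normr_ge0 L; lra.
have : x ^+ 2 <= 0 by nra.
have := sqr_ge0 x => h1 h2.
have : x ^+ 2 = 0 by lra.
by move/eqP; rewrite sqrf_eq0 => /eqP ->; rewrite mul0r.
Qed.

Definition gam (s : R) := Num.sqrt (1 - s ^+ 2) - 1.

Lemma gam_prop s : -1 <= s <= 1 ->
  [/\ s ^+ 2 + gam s ^+ 2 + 2 * gam s = 0, - s ^+ 2 <= gam s & gam s <= 0].
Proof.
move=> hs.
have h0 : 0 <= 1 - s ^+ 2 by nra.
have hsq := sqr_sqrtr h0.
have hge := sqrtr_ge0 (1 - s ^+ 2).
rewrite /gam; set r := Num.sqrt (1 - s ^+ 2) in hsq hge *.
split; nra.
Qed.

Lemma scalar_zero (L K1 K2 K3 K4 : R) :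
  (forall s, -1 <= s <= 1 -> 0 <= s * L + gam s * K1 + s ^+ 2 * K2
        + s * gam s * K3 + gam s ^+ 2 * K4) -> L = 0.
Proof.
move=> H; apply: (@lin_zero _ (`|K1| + `|K2| + `|K3| + `|K4|)).
  by rewrite !addr_ge0.
move=> s hs; have [_ g1 g2] := gam_prop hs; have := H s hs.
set g := gam s in g1 g2 *.
set P := g * K1 + s ^+ 2 * K2 + s * g * K3 + g ^+ 2 * K4.
have hP : `|P| <= s ^+ 2 * (`|K1| + `|K2| + `|K3| + `|K4|).
  have ha : `|g| <= s ^+ 2 by rewrite ler_norml; lra.
  have hb : `|s| <= 1 by rewrite ler_norml.
  have a0 := normr_ge0 g; have b0 := normr_ge0 s.
  have e2 : s ^+ 2 = `|s| ^+ 2 by rewrite real_normK ?num_real.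
  have e3 : g ^+ 2 = `|g| ^+ 2 by rewrite real_normK ?num_real.
  have t1 : `|P| <= `|g * K1| + `|s ^+ 2 * K2| + `|s * g * K3| + `|g ^+ 2 * K4|.
    rewrite /P; apply: (le_trans (ler_normD _ _)); rewrite lerD2r.
    apply: (le_trans (ler_normD _ _)); rewrite lerD2r; exact: ler_normD.
  apply: (le_trans t1); rewrite !normrM ?normrX -!expr2 -e2.
  have k1 := normr_ge0 K1; have k2 := normr_ge0 K2.
  have k3 := normr_ge0 K3; have k4 := normr_ge0 K4.
  have s2 : 0 <= s ^+ 2 by rewrite sqr_ge0.
  have s21 : s ^+ 2 <= 1 by nra.
  have u1 : `|g| * `|K1| <= s ^+ 2 * `|K1| by rewrite ler_wpM2r.
  have u3 : `|s| * `|g| * `|K3| <= s ^+ 2 * `|K3|.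
    rewrite ler_wpM2r //; rewrite -[leRHS]mul1r; exact: ler_pM.
  have u4 : `|g| ^+ 2 * `|K4| <= s ^+ 2 * `|K4|.
    rewrite ler_wpM2r // expr2; rewrite -[leRHS]mul1r; apply: ler_pM => //; lra.
  lra.
have := ler_norm P; have := lerNnormlW hP.
rewrite /P => h1 h2 h3; nra.
Qed.


Section Givens.
Variable n : nat.
Implicit Types A B T M : 'M[R]_n.

Lemma givens_tr A B (s g : R) : A^T = -A -> B^T = B ->
  (1%:M + s *: A + g *: B)^T = 1%:M - s *: A + g *: B.
Proof.
move=> hA hB; apply/matrixP => k l.
have hA' := congr1 (fun X : 'M[R]_n => X k l) hA.
have hB' := congr1 (fun X : 'M[R]_n => X k l) hB.
move: hA' hB'; rewrite !mxE /= => -> ->; rewrite ?mxE.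
by rewrite eq_sym; ring.
Qed.

Lemma givens_orth A B (s g : R) : A^T = -A -> B^T = B ->
  A *m A = -B -> A *m B = A -> B *m A = A -> B *m B = B ->
  s ^+ 2 + g ^+ 2 + 2 * g = 0 ->
  (1%:M + s *: A + g *: B) *m (1%:M + s *: A + g *: B)^T = 1%:M.
Proof.
move=> hA hB AA AB BA BB hsg; rewrite givens_tr //.
rewrite !mulmxDl !mulmxDr ?mulmxN ?mulNmx !mul1mx !mulmx1 -!scalemxAl -!scalemxAr.
rewrite ?mulmxN ?scalerN AA AB BA BB.
move: A B {hA hB AA AB BA BB} => A B.
apply/matrixP => k l; rewrite !mxE.
rewrite -[RHS]addr0 -(mul0r (B k l)) -hsg.
ring.
Qed.


Lemma givens_trace A B T M : A^T = -A -> B^T = B ->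
  exists K1 K2 K3 K4 : R, forall s g : R,
  \tr (M *m ((1%:M + s *: A + g *: B) *m T *m (1%:M + s *: A + g *: B)^T)) =
  \tr (M *m T) + s * (\tr (M *m (A *m T)) - \tr (M *m (T *m A)))
  + g * K1 + s ^+ 2 * K2 + s * g * K3 + g ^+ 2 * K4.
Proof.
move=> hA hB.
exists (\tr (M *m (T *m B)) + \tr (M *m (B *m T))), (- \tr (M *m (A *m T *m A))),
  (\tr (M *m (A *m T *m B)) - \tr (M *m (B *m T *m A))), (\tr (M *m (B *m T *m B))).
move=> s g; rewrite givens_tr //.
rewrite !mulmxDl !mulmxDr ?mulmxN ?mulNmx !mul1mx !mulmx1 -!scalemxAl -!scalemxAr.
rewrite ?mulmxN ?mulmxDr ?mulmxN -?scalemxAr ?mulmxA !mxtraceD -?scaleN1r !mxtraceZ.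
ring.
Qed.


Lemma tr_delta_mul (i j : 'I_n) (N : 'M[R]_n) : \tr (delta_mx i j *m N) = N j i.
Proof.
rewrite /mxtrace (bigD1 i) //= big1 ?addr0 => [|k ki].
  rewrite mxE (bigD1 j) //= big1 ?addr0 => [|l lj]; first by rewrite mxE !eqxx mul1r.
  by rewrite mxE eqxx (negbTE lj) mul0r.
rewrite mxE big1 // => l _; by rewrite mxE (negbTE ki) mul0r.
Qed.

Lemma comm_of_orth T M : T^T = T -> M^T = M ->
  (forall Q : 'M[R]_n, Q *m Q^T = 1%:M -> \tr (M *m T) <= \tr (M *m (Q *m T *m Q^T))) ->
  T *m M = M *m T.
Proof.
move=> hT hM H.
set N := T *m M - M *m T.
have hN : forall i j, N i j = - N j i.
  move=> i j; have : N^T = - N by rewrite /N linearB /= !trmx_mul hT hM opprB.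
  by move/matrixP/(_ j i); rewrite !mxE.
suff : N = 0 by move/eqP; rewrite subr_eq0 => /eqP.
apply/matrixP => i j; rewrite [X in _ = X]mxE.
have [<-|ij] := eqVneq i j.
  by have := hN i i; lra.
pose A : 'M[R]_n := delta_mx i j - delta_mx j i.
pose B : 'M[R]_n := delta_mx i i + delta_mx j j.
have ji : (j == i) = false by rewrite eq_sym (negbTE ij).
have hA : A^T = - A by rewrite /A linearB /= !trmx_delta opprB.
have hB : B^T = B by rewrite /B linearD /= !trmx_delta.
have AA : A *m A = - B.
  rewrite /A /B !mulmxBl !mulmxBr !mul_delta_mx_cond !eqxx (negbTE ij) ji /=.
  by apply/matrixP => k l; rewrite !mxE; ring.
have AB : A *m B = A.
  rewrite /A /B !mulmxBl !mulmxDr !mul_delta_mx_cond !eqxx (negbTE ij) ji /=.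
  by apply/matrixP => k l; rewrite !mxE; ring.
have BA : B *m A = A.
  rewrite /A /B !mulmxDl !mulmxBr !mul_delta_mx_cond !eqxx (negbTE ij) ji /=.
  by apply/matrixP => k l; rewrite !mxE; ring.
have BB : B *m B = B.
  rewrite /B !mulmxDl !mulmxDr !mul_delta_mx_cond !eqxx (negbTE ij) ji /=.
  by apply/matrixP => k l; rewrite !mxE; ring.
have [K1 [K2 [K3 [K4 hK]]]] := givens_trace T M hA hB.
set L := \tr (M *m (A *m T)) - \tr (M *m (T *m A)).
have L0 : L = 0.
  apply: (@scalar_zero L K1 K2 K3 K4) => s hs.
  have [h1 _ _] := gam_prop hs.
  have := H _ (givens_orth hA hB AA AB BA BB h1).
  rewrite hK -/L; lra.
have LN : L = N j i - N i j.
  rewrite /L [\tr (M *m (A *m T))]mxtrace_mulC [\tr (M *m (T *m A))]mxtrace_mulC.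
  rewrite -!mulmxA.
  have e : \tr (T *m (A *m M)) = \tr (A *m (M *m T)).
    by rewrite mxtrace_mulC -mulmxA.
  rewrite e -linearB /= -mulmxBr -/N /A mulmxBl linearB /=.
  by rewrite !tr_delta_mul.
have := hN i j; lra.
Qed.

End Givens.


Section Final.

Lemma dotv_pos k (v : 'cV[R]_k) : v != 0 -> 0 < dotv v v.
Proof.
move=> v0; rewrite lt_def dotv_ge0 andbT; apply/eqP => /dotv_eq0 h.
by rewrite h eqxx in v0.
Qed.

Lemma unit_of_pos k (S : 'M[R]_k) :
  (forall v : 'cV[R]_k, v != 0 -> 0 < (v^T *m S *m v) 0 0) -> S \in unitmx.
Proof.
move=> H; rewrite unitmxE unitfE; apply/negP => /det0P [v v0 vS].
have : v^T != 0 by rewrite trmx_eq0.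
move=> /H; rewrite trmxK vS mul0mx mxE ltxx //.
Qed.

Lemma quad_conj k (Q D : 'M[R]_k) (v : 'cV[R]_k) :
  (v^T *m (Q *m D *m Q^T) *m v) 0 0 = ((Q^T *m v)^T *m D *m (Q^T *m v)) 0 0.
Proof. by rewrite trmx_mul trmxK !mulmxA. Qed.

Lemma conj_scalar k (Q : 'M[R]_k) (a : R) : Q *m Q^T = 1%:M -> Q *m a%:M *m Q^T = a%:M.
Proof. by move=> hQ; rewrite mul_mx_scalar -scalemxAl hQ scalemx1. Qed.

Lemma orth_nz k (Q : 'M[R]_k) (v : 'cV[R]_k) : Q *m Q^T = 1%:M -> v != 0 -> Q^T *m v != 0.
Proof.
move=> hQ; apply: contraNneq => h.
by rewrite -(mul1mx v) -hQ -mulmxA h mulmx0.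
Qed.

Lemma conj_sym k (Q S : 'M[R]_k) : S^T = S -> (Q *m S *m Q^T)^T = Q *m S *m Q^T.
Proof. by move=> hS; rewrite !trmx_mul trmxK hS mulmxA. Qed.

Lemma conj_diff1 k (Q S : 'M[R]_k) (a : R) : Q *m Q^T = 1%:M ->
  a%:M - Q *m S *m Q^T = Q *m (a%:M - S) *m Q^T.
Proof. by move=> hQ; rewrite !mulmxBr !mulmxBl conj_scalar. Qed.
Lemma conj_diff2 k (Q S : 'M[R]_k) (a : R) : Q *m Q^T = 1%:M ->
  Q *m S *m Q^T - a%:M = Q *m (S - a%:M) *m Q^T.
Proof. by move=> hQ; rewrite !mulmxBr !mulmxBl conj_scalar. Qed.

Lemma feas_a_conj k (Q S : 'M[R]_k) : Q *m Q^T = 1%:M -> feas_a S -> feas_a (Q *m S *m Q^T).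
Proof.
move=> hQ [hS hp]; split; first exact: conj_sym.
by move=> v v0; rewrite quad_conj; apply: hp; exact: orth_nz.
Qed.

Lemma feas_b_conj k smin smax (Q S : 'M[R]_k) : Q *m Q^T = 1%:M ->
  feas_b smin smax S -> feas_b smin smax (Q *m S *m Q^T).
Proof.
move=> hQ [hS [h1 h2]]; have e1 := conj_diff1 S smax hQ.
have e4 := conj_diff2 S smin hQ.
split; first exact: conj_sym.
by split => v; [rewrite e1 quad_conj; apply: h1 | rewrite e4 quad_conj; apply: h2].
Qed.

Lemma feas_b_pos k smin smax (S : 'M[R]_k) : 0 < smin -> feas_b smin smax S ->
  forall v : 'cV[R]_k, v != 0 -> 0 < (v^T *m S *m v) 0 0.
Proof.
move=> sp [_ [_ h]] v v0; have := h v.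
have e : (v^T *m (S - smin%:M) *m v) 0 0 = (v^T *m S *m v) 0 0 - smin * dotv v v.
  rewrite mulmxBr mulmxBl mul_mx_scalar -scalemxAl [LHS]mxE [X in _ + X]mxE.
  by rewrite [X in _ - X]mxE dotvE.
rewrite e subr_ge0.
move=> h2; apply: (lt_le_trans _ h2); by rewrite mulr_gt0 // dotv_pos.
Qed.

Lemma inv_conj k (Q S : 'M[R]_k) : Q *m Q^T = 1%:M -> S \in unitmx ->
  invmx (Q *m S *m Q^T) = Q *m invmx S *m Q^T.
Proof.
move=> hQ hS; have hQ' := mulmx1C hQ.
have e : (Q *m S *m Q^T) *m (Q *m invmx S *m Q^T) = 1%:M.
  rewrite !mulmxA -(mulmxA _ Q^T Q) hQ' mulmx1 -(mulmxA _ S) mulmxV // mulmx1 //.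
have [u _] := mulmx1_unit e.
by rewrite -[LHS]mulmx1 -e (mulmxA (invmx _)) mulVmx // mul1mx.
Qed.

Lemma tr_conj k (Q S : 'M[R]_k) : Q *m Q^T = 1%:M -> \tr (Q *m S *m Q^T) = \tr S.
Proof.
move=> hQ; rewrite mxtrace_mulC mulmxA (mulmx1C hQ) mul1mx //.
Qed.


Lemma quadE k m (E : 'M[R]_(k, m)) (a b : 'cV[R]_k) :
  dotv (E^T *m a) (E^T *m b) = (a^T *m (E *m E^T) *m b) 0 0.
Proof. by rewrite -dotvE trmx_mul trmxK !mulmxA. Qed.

Lemma row_bound k m (E : 'M[R]_(k, m)) (S : 'M[R]_k) (y : 'cV[R]_k) : S^T = S ->
  S *m (E *m E^T) = (E *m E^T) *m S ->
  vnorm (E^T *m (S *m y)) <= opnorm S * vnorm (E^T *m y).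
Proof.
move=> hS hSM.
set c := opnorm S.
pose v j := iter j (mulmx S) y.
pose a j := dotv (E^T *m v j) (E^T *m v j).
have key : forall j, a j.+1 = dotv (E^T *m v j) (E^T *m v j.+2).
  move=> j; rewrite /a !quadE /= trmx_mul hS.
  have h : (v j)^T *m S *m E *m E^T = (v j)^T *m E *m E^T *m S.
    by rewrite -!mulmxA hSM !mulmxA.
  by rewrite !mulmxA h.
have lc : forall j, a j.+1 ^+ 2 <= a j * a j.+2 by move=> j; rewrite key; exact: CS.
have c0 : 0 <= c := opnorm_ge0 S.
have bdv : forall j, vnorm (v j) <= c ^+ j * vnorm y.
  elim=> [|j IH]; first by rewrite expr0 mul1r.
  apply: (le_trans (opnorm_le S (v j))).
  by rewrite exprS -mulrA ler_wpM2l.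
set oE := opnorm E^T.
have bd : forall j, a j <= (oE * vnorm y) ^+ 2 * c ^+ (2 * j).
  move=> j; rewrite /a -vnorm_sq.
  have h1 := opnorm_le E^T (v j).
  have h2 : vnorm (E^T *m v j) <= oE * (c ^+ j * vnorm y).
    by apply: (le_trans h1); rewrite ler_wpM2l // opnorm_ge0.
  have -> : c ^+ (2 * j) = (c ^+ j) ^+ 2 by rewrite -exprM mulnC.
  have -> : (oE * vnorm y) ^+ 2 * (c ^+ j) ^+ 2 = (oE * (c ^+ j * vnorm y)) ^+ 2.
    by set z := c ^+ j; ring.
  rewrite ler_pXn2r // ?nnegrE ?vnorm_ge0 //.
  by apply: (le_trans (vnorm_ge0 _) h2).
have := logconv c0 (fun j => dotv_ge0 _) lc bd.
rewrite /a /= -!vnorm_sq -exprMn.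
by rewrite ler_pXn2r // ?nnegrE ?mulr_ge0 ?vnorm_ge0.
Qed.

Lemma rownormE m k (A : 'M[R]_(m, k)) j : rownorm A j = vnorm (row j A)^T.
Proof. by rewrite /rownorm /vnorm; congr Num.sqrt; apply: eq_bigr => i _; rewrite !mxE. Qed.

Lemma rownorm_ge0 m k (A : 'M[R]_(m, k)) j : 0 <= rownorm A j.
Proof. exact: sqrtr_ge0. Qed.

Lemma norm2inf_le m k k' (A : 'M[R]_(m, k)) (B : 'M[R]_(m, k')) (c : R) : 0 <= c ->
  (forall j, rownorm A j <= c * rownorm B j) -> norm2inf A <= c * norm2inf B.
Proof.
move=> c0 H; rewrite /norm2inf.
have G0 : 0 <= \big[Num.max/0]_j rownorm B j by apply: bigmax_ge_id.
apply: bigmax_le; first by rewrite mulr_ge0.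
move=> j _; apply: (le_trans (H j)); rewrite ler_wpM2l //.
exact: le_bigmax.
Qed.

Lemma core n p q (X : 'M[R]_(n, p)) (E : 'M[R]_(n, q)) (S : 'M[R]_n) :
  S^T = S -> S \in unitmx ->
  invmx S *m (E *m E^T) = (E *m E^T) *m invmx S ->
  norm2inf (X^T *m E) <= opnorm S * norm2inf (X^T *m invmx S *m E).
Proof.
move=> hS hU hTM.
set T := invmx S in hTM *; set M := E *m E^T in hTM *.
have ST : S *m T = 1%:M by rewrite mulmxV.
have TS : T *m S = 1%:M by rewrite mulVmx.
have hT : T^T = T by rewrite /T trmx_inv hS.
have hSM : S *m M = M *m S.
  by rewrite -[LHS]mulmx1 -TS (mulmxA (S *m M)) -(mulmxA S M T) -hTM (mulmxA S T M) ST mul1mx.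
apply: norm2inf_le; first exact: opnorm_ge0.
move=> j; rewrite !rownormE !row_mul !trmx_mul hT -tr_col trmxK.
set x := col j X.
rewrite {1}(_ : x = S *m (T *m x)); last by rewrite mulmxA ST mul1mx.
have h := row_bound (T *m x) hS hSM. exact: h.

Qed.


Lemma main_gen n p q (X : 'M[R]_(n, p)) (Y : 'M[R]_(n, q)) (lam : R)
  (Bh : 'M[R]_(p, q)) (Sh : 'M[R]_n) (feas : 'M[R]_n -> Prop) :
  minimizer X Y lam feas Bh Sh -> Sh^T = Sh -> Sh \in unitmx ->
  (forall Q : 'M[R]_n, Q *m Q^T = 1%:M -> feas (Q *m Sh *m Q^T)) ->
  norm2inf (X^T *m (Y - X *m Bh)) <=
  opnorm Sh * norm2inf (X^T *m invmx Sh *m (Y - X *m Bh)).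
Proof.
move=> [hf hmin] hS hU hconj.
set E := Y - X *m Bh.
apply: core => //.
set T := invmx Sh; set M := E *m E^T.
have hT : T^T = T by rewrite /T trmx_inv hS.
have hM : M^T = M by rewrite /M trmx_mul trmxK.
have trE : forall Z : 'M[R]_n, \tr (E^T *m Z *m E) = \tr (M *m Z).
  by move=> Z; rewrite mxtrace_mulC /M !mulmxA.
apply: comm_of_orth => // Q hQ.
have := hmin Bh _ (hconj Q hQ).
rewrite /objective inv_conj // tr_conj // -/E !trE -/T.
rewrite !lerD2r.
have [n0|nn0] := eqVneq n 0%N.
  have M0 : M = 0 by apply/matrixP => i; have := ltn_ord i; rewrite [X in (_ < X)%N]n0.
  by rewrite M0 !mul0mx.
have [q0|qn0] := eqVneq q 0%N.
  have M0 : M = 0.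
    apply/matrixP => i k; rewrite !mxE big1 // => l _.
    by have := ltn_ord l; rewrite [X in (_ < X)%N]q0.
  by rewrite M0 !mul0mx.
have kp : 0 < ((2 * n * q)%:R : R)^-1.
  rewrite invr_gt0 ltr0n.
  by change (0 < 2 * n * q)%N; rewrite !muln_gt0 /= !lt0n nn0 qn0.
by rewrite ler_pM2l.
Qed.

End Final.

End Main.

Unset Implicit Arguments.

Theorem lemma3 (R : realType) (n p q : nat)
    (X : 'M[R]_(n, p)) (Y : 'M[R]_(n, q)) (lam : R) (hlam : 0 < lam)
    (Bh : 'M[R]_(p, q)) (Sh : 'M[R]_n) :
  (minimizer X Y lam (@feas_a R n) Bh Sh \/
   exists smin smax : R, 0 < smin /\ smin < smax /\
     minimizer X Y lam (feas_b smin smax) Bh Sh) ->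
  let Eh := Y - X *m Bh in
  norm2inf (X^T *m Eh) <= opnorm Sh * norm2inf (X^T *m invmx Sh *m Eh).
Proof.
move=> H.
change (norm2inf (X^T *m (Y - X *m Bh)) <=
  opnorm Sh * norm2inf (X^T *m invmx Sh *m (Y - X *m Bh))).
case: H => [Hm|[smin [smax [sp [_ Hm]]]]].
  have [[hS hp] _] := Hm.
  apply: (@main_gen R _ _ _ _ _ _ _ _ _ Hm hS (unit_of_pos hp)) => Q hQ.
  exact: feas_a_conj.
have [hf _] := Hm.
apply: (@main_gen R _ _ _ _ _ _ _ _ _ Hm hf.1 (unit_of_pos (feas_b_pos sp hf))) => Q hQ.
exact: feas_b_conj.
Qed.
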